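(* Let $H$ be a canonical 2-edge-cover of a graph $G=(V,E)$, let $H_{brg}$ be the set of bridges of $H$, and suppose $|H_{brg}|=b|H|$ and exactly $t|H|$ edges of $H$ belong to 2EC components of $H$ which are triangles. Let $S=H\setminus H_{brg}$ and assign credits to the components of $(V,S)$ (every component of $(V,S)$ is 2EC, an isolated node being regarded as a degenerate 2EC component) as follows: a component is light if it is a triangle 2EC component of $H$ and receives $1/2$ credit; every other component is heavy and receives $2$ credits. Let $cr(S)$ be the total number of credits and $cost(S)=|S|+cr(S)$. Then $cost(S)\le \left(\frac32-\frac13 t+\frac12 b\right)|H|$.
   Context: A 2-edge-cover of $G=(V,E)$ is $H\subseteq E$ with every node incident to at least two edges of $H$. A graph is 2EC if connected and it stays connected after removal of any one edge; 2EC components of $H$ are components of $(V,H)$ that are 2EC. In a non-2EC component $C$ of $H$, a bridge is an edge whose removal disconnects $C$; a block is a maximal 2EC subgraph of $C$ with at least 2 nodes; a leaf block is a block incident to exactly one bridge of $C$, an inner block otherwise. $H$ is canonical if: (i) every 2EC component of $H$ is an $i$-cycle ($3\le i\le6$) or has at least 7 edges; (ii) leaf blocks have at least 6 edges and inner blocks at least 4 edges; (iii) no 2-edge-cover of the same size with fewer connected components can be obtained from $H$ by adding up to 3 edges and removing the same number of edges. *)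

(* Defs.v *)
From HB Require Import structures.
From mathcomp Require Import all_boot all_order all_algebra.
Set Implicit Arguments. Unset Strict Implicit. Unset Printing Implicit Defensive.
Import Order.TTheory GRing.Theory Num.Theory.

(* Graphs: a finite simple graph G = (V, E) with V a finType and E a set of
   2-element subsets of V.  Subgraphs / edge sets are {set {set V}}. *)

Section Defs.
Variable V : finType.
Implicit Types (W C : {set V}) (E F H : {set {set V}}).

Definition simple_graph E : Prop := forall e, e \in E -> #|e| = 2.

Definition adjW W F : rel V :=
  fun x y => [&& x \in W, y \in W & [set x; y] \in F].

Definition connectedb W F : bool :=
  [forall x in W, forall y in W, connect (adjW W F) x y].

Definition twoEC W F : bool :=
  connectedb W F && [forall f in F, connectedb W (F :\ f)].

Definition edges_in W F : {set {set V}} := [set e in F | e \subset W].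

Definition comps F : {set {set V}} :=
  [set [set y | connect (adjW setT F) x y] | x : V].

Definition deg F (v : V) : nat := #|[set e in F | v \in e]|.

Definition two_edge_cover H : bool := [forall v, 2 <= deg H v].

Definition twoEC_comp H C : bool := (C \in comps H) && twoEC C (edges_in C H).

Definition is_cycle_comp H C (i : nat) : bool :=
  [&& C \in comps H, #|C| == i, #|edges_in C H| == i &
      [forall v in C, deg (edges_in C H) v == 2]].

Definition bridges H : {set {set V}} :=
  [set e in H | [exists C in comps H,
     [&& ~~ twoEC C (edges_in C H), e \subset C &
         ~~ connectedb C (edges_in C H :\ e)]]].

Definition is_block H C W F : Prop :=
  [/\ C \in comps H, ~~ twoEC C (edges_in C H),
      [&& W \subset C, F \subset edges_in W H, twoEC W F & 2 <= #|W|] &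
      forall W' F', W \subset W' -> F \subset F' -> W' \subset C ->
        F' \subset edges_in W' H -> twoEC W' F' -> 2 <= #|W'| ->
        W' = W /\ F' = F].

Definition nb_incident_bridges H W : nat :=
  #|[set e in bridges H | e :&: W != set0]|.

Definition leaf_block H C W F : Prop :=
  is_block H C W F /\ nb_incident_bridges H W = 1.

Definition inner_block H C W F : Prop :=
  is_block H C W F /\ nb_incident_bridges H W <> 1.

Definition canonical E H : Prop :=
  [/\ H \subset E, two_edge_cover H,
      (* (i) *)
      (forall C, twoEC_comp H C ->
         (exists2 i, 3 <= i <= 6 & is_cycle_comp H C i)
         \/ 7 <= #|edges_in C H|),
      (* (ii) *)
      ((forall C W F, leaf_block H C W F -> 6 <= #|F|) /\
       (forall C W F, inner_block H C W F -> 4 <= #|F|)) &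
      (* (iii) *)
      (forall H', H' \subset E -> two_edge_cover H' -> #|H'| = #|H| ->
         #|H' :\: H| = #|H :\: H'| -> #|H' :\: H| <= 3 ->
         ~ (#|comps H'| < #|comps H|))].

Definition triangle_comp H C : bool := twoEC_comp H C && is_cycle_comp H C 3.

Definition triangle_edges H : {set {set V}} :=
  [set e in H | [exists C in comps H, triangle_comp H C && (e \subset C)]].

Definition S_of H : {set {set V}} := H :\: bridges H.

Definition light_comps H : {set {set V}} :=
  [set K in comps (S_of H) | triangle_comp H K].

Definition heavy_comps H : {set {set V}} :=
  comps (S_of H) :\: light_comps H.

Local Open Scope ring_scope.

Definition credits H : rat :=
  (1 / 2) * #|light_comps H|%:R + 2 * #|heavy_comps H|%:R.

Definition costS H : rat := #|S_of H|%:R + credits H.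

End Defs.

(* Main.v *)
Require Import Defs.
From HB Require Import structures.
From mathcomp Require Import all_boot all_order all_algebra.
From mathcomp Require Import zify.
From Stdlib Require Import Lia.
Set Implicit Arguments. Unset Strict Implicit. Unset Printing Implicit Defensive.
Import Order.TTheory GRing.Theory Num.Theory.

Section Aux.
Variable V : finType.
Implicit Types (W C : {set V}) (E F G H : {set {set V}}).

Lemma adjW_sym W F : symmetric (adjW W F).
Proof. by move=> x y; rewrite /adjW setUC andbCA. Qed.

Lemma connW_sym W F x y : connect (adjW W F) x y = connect (adjW W F) y x.
Proof. exact: (sym_connect_sym (adjW_sym W F)). Qed.

Definition cls F x := [set y | connect (adjW setT F) x y].

Lemma compsE F : comps F = [set cls F x | x : V].
Proof. by []. Qed.

Lemma in_cls F x y : (y \in cls F x) = connect (adjW setT F) x y.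
Proof. by rewrite inE. Qed.

Lemma cls_refl F x : x \in cls F x.
Proof. by rewrite in_cls connect0. Qed.

Lemma cls_eq F x y : connect (adjW setT F) x y -> cls F x = cls F y.
Proof.
move=> cxy; apply/setP=> z; rewrite !in_cls; apply/idP/idP => h.
  by apply: connect_trans h; rewrite connW_sym.
exact: connect_trans cxy h.
Qed.

Lemma cls_eqP F x y : cls F x = cls F y -> connect (adjW setT F) x y.
Proof. by move=> e; rewrite -in_cls e cls_refl. Qed.

Lemma comps_mem F C x : C \in comps F -> x \in C -> C = cls F x.
Proof.
by case/imsetP=> r _ -> ; rewrite in_cls => h; apply: cls_eq.
Qed.

Lemma comps_uniq F C C' x : C \in comps F -> C' \in comps F -> x \in C -> x \in C' -> C = C'.
Proof. by move=> h1 h2 x1 x2; rewrite (comps_mem h1 x1) (comps_mem h2 x2). Qed.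

Lemma cls_in_comps F x : cls F x \in comps F.
Proof. exact: imset_f. Qed.

Lemma comps_closed F C x y : C \in comps F -> x \in C -> [set x; y] \in F -> y \in C.
Proof.
move=> hC xC e; rewrite (comps_mem hC xC) in_cls connect1 //.
by rewrite /adjW !inE e.
Qed.

Lemma connect_mono W W' F F' x y : W \subset W' -> F \subset F' ->
  connect (adjW W F) x y -> connect (adjW W' F') x y.
Proof.
move=> sW sF; apply: connect_sub => a b /and3P[aW bW e].
by apply: connect1; rewrite /adjW (subsetP sW _ aW) (subsetP sW _ bW) (subsetP sF _ e).
Qed.

Lemma bypass W F u v a b : connect (adjW W (F :\ [set u; v])) u v ->
  connect (adjW W F) a b -> connect (adjW W (F :\ [set u; v])) a b.
Proof.
move=> huv; apply: connect_sub => x y /and3P[xW yW e].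
case: (eqVneq [set x; y] [set u; v]) => exy.
  have : x \in [set u; v] by rewrite -exy !inE eqxx.
  have : y \in [set u; v] by rewrite -exy !inE eqxx orbT.
  rewrite !inE => /orP[]/eqP-> /orP[]/eqP->; rewrite ?connect0 //.
  by rewrite connW_sym.
by apply: connect1; rewrite /adjW xW yW !inE exy e.
Qed.

Lemma two_set (e : {set V}) z : #|e| = 2 -> z \in e -> exists w, w != z /\ e = [set z; w].
Proof.
move=> /eqP/cards2P[a [b [ab ->]]]; rewrite !inE => /orP[]/eqP->.
  by exists b; rewrite eq_sym.
by exists a; split=> //; rewrite setUC.
Qed.


Lemma conn_remove G u v x y : connect (adjW setT G) x y ->
  let c := connect (adjW setT (G :\ [set u; v])) in
  c x y \/ ((c x u \/ c x v) /\ (c y u \/ c y v)).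
Proof.
move=> /connectP[p]; elim: p x => [|z p IH] x /=.
  by move=> _ ->; left; apply: connect0.
case/andP=> /and3P[_ _ exz] pz ey.
have [Hz|[Hzu Hzy]] := IH z pz ey.
- case: (eqVneq [set x; z] [set u; v]) => exy.
  + have xuv : x \in [set u; v] by rewrite -exy !inE eqxx.
    have zuv : z \in [set u; v] by rewrite -exy !inE eqxx orbT.
    right; split.
      by move: xuv; rewrite !inE => /orP[]/eqP->; [left|right]; apply: connect0.
    move: zuv; rewrite !inE => /orP[]/eqP zz; subst z.
      by left; rewrite connW_sym.
    by right; rewrite connW_sym.
  + left; apply: connect_trans Hz; apply: connect1.
    by rewrite /adjW !inE exy exz.
- case: (eqVneq [set x; z] [set u; v]) => exy.
  + have xuv : x \in [set u; v] by rewrite -exy !inE eqxx.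
    right; split => //.
    by move: xuv; rewrite !inE => /orP[]/eqP->; [left|right]; apply: connect0.
  + have xz : connect (adjW setT (G :\ [set u; v])) x z.
      by apply: connect1; rewrite /adjW !inE exy exz.
    right; split => //.
    by case: Hzu => h; [left|right]; apply: connect_trans h.
Qed.

Lemma comps_remove1 G u v : #|comps (G :\ [set u; v])| <= #|comps G| + 1.
Proof.
set G' := G :\ [set u; v].
set T := [set x | cls G' x != cls G' u].
have sub : comps G' \subset cls G' u |: (cls G' @: T).
  rewrite compsE; apply/subsetP => K /imsetP[x _ ->]; rewrite in_setU1.
  case: eqVneq => //= ne; by rewrite imset_f // inE ne.
have c1 : #|cls G' @: T| <= #|cls G @: T|.
  pose h (K : {set V}) := if [pick x in T | cls G x == K] is Some y then cls G' y else set0.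
  have : cls G' @: T \subset h @: (cls G @: T).
    apply/subsetP => K /imsetP[x xT ->]; apply/imsetP; exists (cls G x).
      exact: imset_f.
    rewrite /h; case: pickP => [y /andP[yT /eqP eq]|/(_ x)]; last by rewrite xT eqxx.
    have cxy : connect (adjW setT G) x y by apply: cls_eqP.
    move: xT yT; rewrite !inE => xT yT.
    have [c|[cx cy]] := conn_remove u v cxy; first by rewrite (cls_eq c).
    have nxu : ~~ connect (adjW setT G') x u.
      by apply: contra xT => c; rewrite (cls_eq c).
    have nyu : ~~ connect (adjW setT G') y u.
      by apply: contra yT => c; rewrite (cls_eq c).
    case: cx => cx; first by rewrite cx in nxu.
    case: cy => cy; first by rewrite cy in nyu.
    apply: cls_eq; apply: connect_trans cx _; by rewrite connW_sym.
  move/subset_leq_card => l; apply: leq_trans l _; exact: leq_imset_card.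
have c2 : #|cls G @: T| <= #|comps G|.
  by apply: subset_leq_card; apply/subsetP => K /imsetP[x _ ->]; exact: cls_in_comps.
apply: leq_trans (subset_leq_card sub) _.
rewrite cardsU1 addnC leq_add ?leq_b1 //.
exact: leq_trans c1 c2.
Qed.

Lemma comps_remove F G : F \subset G -> (forall e, e \in G -> #|e| = 2) ->
  #|comps F| <= #|comps G| + #|G :\: F|.
Proof.
move: {2}#|G :\: F| (erefl #|G :\: F|) => n; elim: n G => [|n IH] G hn sFG h2.
  have : G :\: F == set0 by rewrite -cards_eq0 hn.
  rewrite setD_eq0 => sGF; have -> : F = G by apply/eqP; rewrite eqEsubset sFG.
  by rewrite leq_addr.
have : 0 < #|G :\: F| by rewrite hn.
case/card_gt0P => e; rewrite inE => /andP[eF eG].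
have [u [v [uv ee]]] : exists u v, u != v /\ e = [set u; v].
  by apply/cards2P/eqP; apply: h2.
have sF' : F \subset G :\ e.
  apply/subsetP => x xF; rewrite !inE (subsetP sFG _ xF) andbT.
  by apply: contraNneq eF => <-.
have hn' : #|(G :\ e) :\: F| = n.
  have : G :\: F = e |: ((G :\ e) :\: F).
    apply/setP => x; rewrite !inE; case: (eqVneq x e) => [->|] //=.
    by rewrite eF eG.
  move=> eq; move: hn; rewrite eq cardsU1 !inE eqxx andbF /= add1n; by case.
have := IH (G :\ e) hn' sF' (fun x hx => h2 x (subsetP (subD1set G e) x hx)).
rewrite hn' => l; apply: leq_trans l _.
rewrite hn -[n.+1]add1n addnA leq_add2r ee; exact: comps_remove1.
Qed.


Lemma cls_restrict H r y : connect (adjW setT H) r y ->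
  connect (adjW (cls H r) (edges_in (cls H r) H)) r y.
Proof.
move=> /connectP[p]; elim/last_ind: p y => [|p z IH] y /=.
  by move=> _ ->; apply: connect0.
rewrite rcons_path last_rcons => /andP[pp /and3P[_ _ e]] ->.
have c1 := IH _ pp (erefl _).
apply: connect_trans c1 _; apply: connect1.
have l1 : last r p \in cls H r.
  by rewrite in_cls; apply/connectP; exists p.
have z1 : z \in cls H r.
  move: l1; rewrite !in_cls => l1; apply: connect_trans l1 (connect1 _).
  by rewrite /adjW !inE e.
by rewrite /adjW l1 z1 !inE e /= subUset !sub1set l1 z1.
Qed.

Lemma comp_connected H C : C \in comps H -> connectedb C (edges_in C H).
Proof.
case/imsetP=> r _ ->; rewrite -/(cls H r).
apply/forall_inP => a ha; apply/forall_inP => b hb.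
move: (ha) (hb); rewrite !in_cls => /cls_restrict ca /cls_restrict cb.
by apply: connect_trans cb; rewrite connW_sym.
Qed.

Lemma conn_in W F x y : connect (adjW W F) x y -> x \in W -> y \in W.
Proof.
move=> /connectP[p]; elim/last_ind: p y => [|p z IH] y /=; first by move=> _ ->.
rewrite rcons_path last_rcons => /andP[_ /and3P[_ zW _]] -> //.
Qed.

Lemma twoEC_crit W F : connectedb W F ->
  (forall g, g \in F -> exists u v, g = [set u; v] /\ connect (adjW W (F :\ g)) u v) ->
  twoEC W F.
Proof.
move=> cW hg; rewrite /twoEC cW /=; apply/forall_inP => g gF.
have [u [v [-> c]]] := hg g gF.
apply/forall_inP => a ha; apply/forall_inP => b hb.
apply: bypass c _; exact: (forall_inP (forall_inP cW a ha) b hb).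
Qed.


Ltac injt inj := repeat match goal with H : ?f ?a = ?f ?b |- _ =>
   have := inj a b ltac:(lia) ltac:(lia) H; clear H end; lia.

Lemma cycle_lemma H (c : nat -> V) k :
  2 <= k -> (forall i j, i <= k -> j <= k -> c i = c j -> i = j) ->
  (forall i, i < k -> [set c i; c i.+1] \in H) -> [set c k; c 0] \in H ->
  exists W F, [/\ W = [set c (nat_of_ord i) | i : 'I_k.+1],
     F \subset edges_in W H, twoEC W F & 2 <= #|W|].
Proof.
move=> k2 inj eH cH.
set W := [set c (nat_of_ord i) | i : 'I_k.+1].
set F := [set [set c (nat_of_ord i); c (nat_of_ord i).+1] | i : 'I_k] :|: [set [set c k; c 0]].
have cW m : m <= k -> c m \in W.
  by move=> mk; apply/imsetP; exists (Ordinal (n:=k.+1) (m:=m) mk).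
have segF m : m < k -> [set c m; c m.+1] \in F.
  by move=> mk; rewrite inE; apply/orP; left; apply/imsetP; exists (Ordinal mk).
have clF : [set c k; c 0] \in F by rewrite !inE eqxx orbT.
have seg F' a b : a <= b <= k -> (forall m, a <= m < b -> [set c m; c m.+1] \in F') ->
    connect (adjW W F') (c a) (c b).
  elim: b => [|b IH] /andP[ab bk] h.
    by have -> : a = 0 by lia.
  case: (eqVneq a b.+1) => [->|ne]; first exact: connect0.
  apply: connect_trans (IH _ _) _.
  - by apply/andP; split; lia.
  - by move=> m hm; apply: h; lia.
  apply: connect1; rewrite /adjW cW ?cW ?h //; lia.
have inset x y z : z \in [set x; y] = (z == x) || (z == y) by rewrite !inE.
have ne1 m i : m < k -> i < k -> m != i -> [set c m; c m.+1] != [set c i; c i.+1].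
  move=> mk ik mi; apply/eqP => e.
  have h1 : c m \in [set c i; c i.+1] by rewrite -e inset eqxx.
  have h2 : c m.+1 \in [set c i; c i.+1] by rewrite -e inset eqxx orbT.
  move/eqP: mi => mi.
  move: h1 h2; rewrite !inset => /orP[]/eqP h1 /orP[]/eqP h2; injt inj.
have ne2 m : m < k -> [set c m; c m.+1] != [set c k; c 0].
  move=> mk; apply/eqP => e.
  have h1 : c m \in [set c k; c 0] by rewrite -e inset eqxx.
  have h2 : c m.+1 \in [set c k; c 0] by rewrite -e inset eqxx orbT.
  move: h1 h2; rewrite !inset => /orP[]/eqP h1 /orP[]/eqP h2; injt inj.
exists W, F; split => //.
- apply/subsetP => g; rewrite !inE => /orP[/imsetP[i _ ->]|/eqP->].
    have ik := ltn_ord i; rewrite eH // subUset !sub1set !cW //; lia.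
  by rewrite cH subUset !sub1set !cW //; lia.
- apply: twoEC_crit.
    apply/forall_inP => x /imsetP[i _ ->]; apply/forall_inP => y /imsetP[j _ ->].
    have c0i : forall i, i <= k -> connect (adjW W F) (c 0) (c i).
      move=> l lk; apply: seg; first by lia.
      by move=> m hm; apply: segF; lia.
    apply: connect_trans (c0i _ _); last by rewrite -ltnS.
    by rewrite connW_sym; apply: c0i; rewrite -ltnS.
  move=> g; rewrite !inE => /orP[/imsetP[i _ ->]|/eqP->].
    exists (c i), (c i.+1); split => //; rewrite connW_sym.
    have ik : (i < k)%N by [].
    apply: connect_trans (_ : connect _ _ (c k)) _.
      apply: seg; first by lia.
      by move=> m hm; rewrite in_setD1 segF ?andbT ?ne1 //; lia.
    apply: connect_trans (_ : connect _ _ (c 0)) _.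
      apply: connect1; rewrite /adjW !cW //.
      by rewrite in_setD1 clF andbT eq_sym ne2.
    apply: seg; first by lia.
    by move=> m hm; rewrite in_setD1 segF ?andbT ?ne1 //; lia.
  exists (c k), (c 0); split => //; rewrite connW_sym.
  apply: seg; first by lia.
  by move=> m hm; rewrite in_setD1 segF ?andbT ?ne2 //; lia.
- have c01 : c 0 != c 1 by apply/eqP => /inj; lia.
  apply: leq_trans (subset_leq_card (_ : [set c 0; c 1] \subset W)).
    by rewrite cards2 c01.
  by rewrite subUset !sub1set !cW //; lia.
Qed.


Lemma exists_cycle H C : (forall e, e \in H -> #|e| = 2) -> two_edge_cover H ->
  C \in comps H ->
  exists W F, [/\ W \subset C, F \subset edges_in W H, twoEC W F & 2 <= #|W|].
Proof.
move=> h2 cov /imsetP[x0 _ eC]; rewrite -/(cls H x0) in eC.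
have x0C : x0 \in C by rewrite eC cls_refl.
pose good (s : seq V) := [/\ uniq s, all (mem C) s &
  forall i, i.+1 < size s -> [set nth x0 s i; nth x0 s i.+1] \in H].
set goal := exists W F, _.
suff: forall n, (exists s, good s /\ size s = n.+1) \/ goal.
  case/(_ #|V|) => // -[s [[us _ _] ss]].
  by have := max_card (mem s); rewrite (card_uniqP us) ss ltnn.
elim => [|n IH]; first by left; exists [:: x0]; split => //; split => //=; rewrite x0C.
case: IH => [[s [[us als es] ss]]|g]; last by right.
set z := nth x0 s n.
have zC : z \in C by apply: (allP als); rewrite mem_nth // ss.
have [w [wH wz wp]] : exists w, [/\ [set z; w] \in H, w != z &
    (0 < n -> w != nth x0 s n.-1)].
  have := forallP cov z; rewrite /deg => /card_gt1P[e1 [e2 [e1i e2i ne]]].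
  move: e1i e2i; rewrite !inE => /andP[e1H ze1] /andP[e2H ze2].
  have [w1 [w1z ee1]] := two_set (h2 _ e1H) ze1.
  have [w2 [w2z ee2]] := two_set (h2 _ e2H) ze2.
  have w12 : w1 != w2 by apply: contraNneq ne => e; rewrite ee1 ee2 e.
  case: (eqVneq w1 (nth x0 s n.-1)) => [e|ne1].
    exists w2; split => //; first by rewrite -ee2.
    by move=> _; rewrite -e eq_sym.
  by exists w1; split => //; rewrite -ee1.
case ws: (w \in s).
  right.
  set j := index w s.
  have js : j < size s by rewrite index_mem.
  have nj : nth x0 s j = w by rewrite nth_index.
  have jn : j + 2 <= n.
    have jn : j <= n by rewrite -ltnS -ss.
    case: (eqVneq j n) => ej; first by move: wz; rewrite -nj ej eqxx.
    case: (eqVneq j n.-1) => ej'; last by lia.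
    have n0 : 0 < n by lia.
    by move: (wp n0); rewrite -nj ej' eqxx.
  pose c i := nth x0 s (j + i).
  have k2 : 2 <= n - j by lia.
  have cinj : forall a b, a <= n-j -> b <= n-j -> c a = c b -> a = b.
    move=> a b ha hb /eqP; rewrite /c nth_uniq ?ss //; try lia.
  have ce : forall i, i < n-j -> [set c i; c i.+1] \in H.
    by move=> i ik; rewrite /c addnS es // ss; lia.
  have cl : [set c (n-j); c 0] \in H.
    by rewrite /c subnKC ?addn0 ?nj //; lia.
  have [W [F [eW sF tW cW]]] := cycle_lemma k2 cinj ce cl.
  exists W, F; split => //.
  rewrite eW; apply/subsetP => y /imsetP[i _ ->]; apply: (allP als).
  rewrite mem_nth // ss; have := ltn_ord i; lia.
left; exists (rcons s w); split; last by rewrite size_rcons ss.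
split.
- by rewrite rcons_uniq ws us.
- by rewrite all_rcons als andbT; apply: comps_closed wH => //; rewrite eC cls_in_comps.
move=> i; rewrite size_rcons ss ltnS => hi.
rewrite !nth_rcons ss.
case: (ltnP i.+1 n.+1) => h.
  by rewrite (ltnW h) es // ss.
have -> : i = n by lia.
by rewrite ltnSn eqxx.
Qed.


Lemma block_exists H C : C \in comps H -> ~~ twoEC C (edges_in C H) ->
  (exists W F, [/\ W \subset C, F \subset edges_in W H, twoEC W F & 2 <= #|W|]) ->
  exists W F, is_block H C W F.
Proof.
move=> hC nt [W0 [F0 [s1 s2 t3 c4]]].
pose P (p : {set V} * {set {set V}}) :=
  [&& p.1 \subset C, p.2 \subset edges_in p.1 H, twoEC p.1 p.2 & 2 <= #|p.1|].
have P0 : P (W0, F0) by rewrite /P /= s1 s2 t3 c4.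
case: (arg_maxnP (fun p : {set V} * {set {set V}} => #|p.1| + #|p.2|) P0) => [[W F] PW maxW].
exists W, F; split => //.
move=> W' F' sW sF sW' sF' t' c'.
have := maxW (W', F'); rewrite /P /= sW' sF' t' c' => /(_ isT) /= le.
have l1 := subset_leq_card sW; have l2 := subset_leq_card sF.
have e1 : #|W'| <= #|W|.
  by rewrite -(leq_add2r #|F'|); apply: leq_trans le _; rewrite leq_add2l.
have e2 : #|F'| <= #|F|.
  by rewrite -(leq_add2l #|W'|); apply: leq_trans le _; rewrite leq_add2r.
by split; apply/eqP; rewrite eq_sym eqEcard ?sW ?sF.
Qed.


Lemma sum_comps H (S : {set {set V}}) : S \subset H -> (forall e, e \in H -> #|e| = 2) ->
  \sum_(C in comps H) #|edges_in C S| <= #|S|.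
Proof.
move=> sSH h2.
pose phi (e : {set V}) := if [pick x in e] is Some x then cls H x else set0.
have phiC (e C : {set V}) x : C \in comps H -> x \in e -> e \subset C -> phi e = C.
  move=> hC xe sC; rewrite /phi; case: pickP => [y ye|/(_ x)]; last by rewrite xe.
  by rewrite (comps_mem hC (subsetP sC y ye)).
have Pphi : forall e, e \in S -> phi e \in comps H.
  move=> e eS; have : 0 < #|e| by rewrite h2 // (subsetP sSH).
  case/card_gt0P => x xe.
  suff -> : phi e = cls H x by exact: cls_in_comps.
  apply: phiC (xe) _; first exact: cls_in_comps.
  apply/subsetP => y ye; rewrite in_cls.
  have [w [wx ew]] := two_set (h2 _ (subsetP sSH _ eS)) xe.
  move: ye; rewrite ew !inE => /orP[]/eqP->; first exact: connect0.
  by apply: connect1; rewrite /adjW !inE -ew (subsetP sSH).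
rewrite -[#|S|]sum1_card [X in _ <= X](partition_big phi (mem (comps H))) //=.
apply: leq_sum => C hC.
rewrite -sum1_card; rewrite big_mkcond [X in _ <= X]big_mkcond /=.
apply: leq_sum => e _; rewrite !inE.
case: (boolP (e \in S)) => //= eS; case: (boolP (e \subset C)) => //= sC.
have : 0 < #|e| by rewrite h2 // (subsetP sSH).
case/card_gt0P => x xe; by rewrite (phiC e C x hC xe sC) eqxx.
Qed.


Lemma bridge_comp H e : e \in bridges H -> exists2 C, C \in comps H &
  [&& ~~ twoEC C (edges_in C H), e \subset C & ~~ connectedb C (edges_in C H :\ e)].
Proof. by rewrite inE => /andP[_ /exists_inP[C hC h]]; exists C. Qed.

Lemma nobridge_2EC H C (e : {set V}) x : C \in comps H -> twoEC C (edges_in C H) ->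
  x \in e -> e \subset C -> e \notin bridges H.
Proof.
move=> hC tC xe sC; apply/negP => /bridge_comp[C' hC' /and3P[nt sC' _]].
have eq : C' = C by apply: (comps_uniq hC' hC); [exact: subsetP sC' x xe|exact: subsetP sC x xe].
by rewrite eq tC in nt.
Qed.

Lemma nobridge_cyc H C W F (f : {set V}) : (forall e, e \in H -> #|e| = 2) -> C \in comps H ->
  W \subset C -> F \subset edges_in W H -> twoEC W F -> f \in F -> f \notin bridges H.
Proof.
move=> h2 hC sW sF tW fF.
have := subsetP sF f fF; rewrite inE => /andP[fH fW].
have [u [v [uv ef]]] : exists u v, u != v /\ f = [set u; v] by apply/cards2P/eqP; apply: h2.
have uW : u \in W by apply: (subsetP fW); rewrite ef !inE eqxx.
have vW : v \in W by apply: (subsetP fW); rewrite ef !inE eqxx orbT.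
apply/negP => /bridge_comp[C' hC' /and3P[nt sC' nc]].
have uC : u \in C by apply: (subsetP sW).
have eq : C' = C.
  by apply: (comps_uniq (x:=u) hC' hC) => //; apply: (subsetP sC'); rewrite ef !inE eqxx.
rewrite eq in nc; move/negP: nc; apply.
apply/forall_inP => a ha; apply/forall_inP => b hb.
rewrite ef; apply: bypass.
  have cWf : connectedb W (F :\ f) by move: tW => /andP[_ /forall_inP]; apply.
  have := forall_inP (forall_inP cWf u uW) v vW; rewrite ef.
  apply: connect_mono => //; apply/subsetP => g; rewrite !inE => /andP[-> gF] /=.
  move: (subsetP sF g gF); rewrite !inE => /andP[-> gW] /=.
  exact: subset_trans gW sW.
exact: (forall_inP (forall_inP (comp_connected hC) a ha) b hb).
Qed.


Lemma comp_bound E H C : simple_graph E -> canonical E H -> C \in comps H ->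
  4 <= #|edges_in C (S_of H)| + triangle_comp H C.
Proof.
move=> simp [sHE cov hi [hl hin] _] hC.
have h2 : forall e, e \in H -> #|e| = 2 by move=> e he; apply: simp; apply: (subsetP sHE).
case tC: (twoEC C (edges_in C H)).
  have eqS : edges_in C (S_of H) = edges_in C H.
    apply/setP => e; rewrite [LHS]inE [RHS]inE /S_of in_setD.
    case eH: (e \in H); case sC: (e \subset C); rewrite ?andbF ?andbT //=.
    have : 0 < #|e| by rewrite h2.
    by case/card_gt0P => x xe; rewrite (nobridge_2EC hC tC xe sC).
  have tc : twoEC_comp H C by rewrite /twoEC_comp hC tC.
  case: (hi C tc) => [[i /andP[i3 i6] cyc]|h7].
    move/and4P: (cyc) => [_ _ /eqP ei _].
    case: (eqVneq i 3) => [e3|ne3].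
      have -> : triangle_comp H C by rewrite /triangle_comp tc -e3 cyc.
      by rewrite eqS ei e3.
    rewrite eqS ei; lia.
  rewrite eqS; lia.
have [W [F blk]] := block_exists hC (negbT tC) (exists_cycle h2 cov hC).
have hF : 4 <= #|F|.
  case: (eqVneq (nb_incident_bridges H W) 1) => e.
    have := hl C W F (conj blk e); lia.
  have ne : nb_incident_bridges H W <> 1 by apply/eqP.
  exact: hin C W F (conj blk ne).
case: blk => _ _ /and4P[sW sF tW _] _.
apply: leq_trans hF (leq_trans _ (leq_addr _ _)); apply: subset_leq_card.
apply/subsetP => f fF.
move: (subsetP sF f fF); rewrite inE => /andP[fH fW].
rewrite inE /S_of in_setD fH (subset_trans fW sW) !andbT /=.
exact: (nobridge_cyc h2 hC sW sF tW fF).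
Qed.


Lemma card_bigcup_le (I : finType) (A : {pred I}) (Fi : I -> {set {set V}}) :
  #|\bigcup_(i in A) Fi i| <= \sum_(i in A) #|Fi i|.
Proof.
elim/big_rec2: _ => [|i n U _ le]; first by rewrite cards0.
by apply: leq_trans (leq_card_setU _ _) _; rewrite leq_add2l.
Qed.

Lemma twoEC_in_S H C : (forall e, e \in H -> #|e| = 2) -> C \in comps H ->
  twoEC C (edges_in C H) -> C \in comps (S_of H).
Proof.
move=> h2 hC tC; move: (hC) => /imsetP[r _ eC]; rewrite -/(cls H r) in eC.
have rC : r \in C by rewrite eC cls_refl.
suff -> : C = cls (S_of H) r by apply: cls_in_comps.
apply/setP => y; apply/idP/idP => hy.
  have := forall_inP (forall_inP (andP tC).1 r rC) y hy.
  rewrite in_cls; apply: connect_sub => x z /and3P[xC zC].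
  rewrite inE => /andP[xzH sC]; apply: connect1.
  rewrite /adjW !in_setT /S_of in_setD xzH andbT /=.
  by apply: (nobridge_2EC (x:=x) hC tC) => //; rewrite !inE eqxx.
rewrite eC in_cls; move: hy; rewrite in_cls; apply: connect_mono => //.
by apply: subsetDl.
Qed.

Lemma sum_bool (I : finType) (A : {pred I}) (P : pred I) :
  \sum_(i in A) (P i : nat) = #|[set i in A | P i]|.
Proof.
rewrite -[#|_|]sum1_card [RHS](eq_bigl (fun i => (i \in A) && P i)); last by move=> i; rewrite inE.
by rewrite [RHS]big_mkcondr /=; apply: eq_bigr => i _; case: (P i).
Qed.

End Aux.

From mathcomp Require Import ring lra.
Local Open Scope ring_scope.

Theorem lemma5 (V : finType) (E H : {set {set V}}) (b t : rat) :
  simple_graph E ->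
  canonical E H ->
  #|bridges H|%:R = b * #|H|%:R ->
  #|triangle_edges H|%:R = t * #|H|%:R ->
  costS H <= (3 / 2 - t / 3 + b / 2) * #|H|%:R.
Proof.
move=> simp can Hb Ht.
have [sHE cov hi _ _] := can.
have h2 : forall e, e \in H -> #|e| = 2 by move=> e he; apply: simp; apply: (subsetP sHE).
set TC := [set C in comps H | triangle_comp H C].
have sBH : bridges H \subset H by apply/subsetP => e; rewrite inE => /andP[].
have f1 : (#|S_of H| + #|bridges H| = #|H|)%N.
  by rewrite /S_of cardsD (setIidPr sBH) subnK // subset_leq_card.
have sLS : light_comps H \subset comps (S_of H).
  by apply/subsetP => K; rewrite inE => /andP[].
have f2 : (#|heavy_comps H| + #|light_comps H| = #|comps (S_of H)|)%N.
  by rewrite /heavy_comps cardsD (setIidPr sLS) subnK // subset_leq_card.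
have f3 : (#|comps (S_of H)| <= #|comps H| + #|bridges H|)%N.
  have := @comps_remove V (S_of H) H (subsetDl _ _) h2.
  by rewrite /S_of setDDr setDv set0U (setIidPr sBH).
have f4 : (4 * #|comps H| <= #|S_of H| + #|TC|)%N.
  have : (\sum_(C in comps H) 4 <= \sum_(C in comps H) (#|edges_in C (S_of H)| + triangle_comp H C))%N.
    by apply: leq_sum => C hC; apply: (comp_bound simp can hC).
  rewrite big_split /= sum_nat_const sum_bool mulnC => le.
  apply: leq_trans le _; rewrite leq_add2r; apply: sum_comps h2.
  exact: subsetDl.
have f5 : (#|TC| <= #|light_comps H|)%N.
  apply: subset_leq_card; apply/subsetP => C; rewrite !inE => /andP[hC tr].
  rewrite tr andbT; apply: twoEC_in_S h2 (hC) _.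
  by move: tr; rewrite /triangle_comp /twoEC_comp hC => /andP[/andP[]].
have f6 : (#|triangle_edges H| <= 3 * #|TC|)%N.
  have : triangle_edges H \subset \bigcup_(C in TC) edges_in C H.
    apply/subsetP => e; rewrite inE => /andP[eH /exists_inP[C hC /andP[tr sC]]].
    by apply/bigcupP; exists C; rewrite ?inE ?hC ?tr ?eH ?sC.
  move/subset_leq_card => le; apply: leq_trans le _.
  apply: leq_trans (card_bigcup_le _ _) _.
  rewrite mulnC -sum_nat_const; apply: leq_sum => C; rewrite inE => /andP[_].
  by case/andP => _ /and4P[_ _ /eqP -> _].
have key : (6 * #|S_of H| + 3 * #|light_comps H| + 12 * #|heavy_comps H|
            + 2 * #|triangle_edges H| <= 9 * #|H| + 3 * #|bridges H|)%N by lia.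
have keyR : (6 * #|S_of H| + 3 * #|light_comps H| + 12 * #|heavy_comps H|
            + 2 * #|triangle_edges H|)%N%:R <= (9 * #|H| + 3 * #|bridges H|)%N%:R :> rat.
  by rewrite ler_nat.
move: keyR; rewrite !natrD.
have -> : (3 / 2 - t / 3 + b / 2) * #|H|%:R =
   3 / 2 * #|H|%:R - (t * #|H|%:R) / 3 + (b * #|H|%:R) / 2 :> rat by ring.
rewrite -Hb -Ht /costS /credits.
lra.
Qed.
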